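(* Let $m\ge1$ and let $W_m(t,x)=\sum_{w} t^{\mathrm{da}(w)}x^{\ell(w)}$, the sum running over all finite words $w$ (including the empty word) over the alphabet $\{1,2,\dots,m\}$, where $\ell(w)$ is the length of $w$. Then $$W_m(t,x)=\frac{1+mx}{1-mx^2-m(m-1)tx^2}.$$
   Context: For a word $w=a_1a_2\cdots a_\ell$, the degree of asymmetry is $\mathrm{da}(w)=|\{i: 1\le i\le \ell/2,\ a_i\neq a_{\ell+1-i}\}|$. *)

(* Defs.v *)
From mathcomp Require Import all_boot all_order all_algebra.
Set Implicit Arguments. Unset Strict Implicit. Unset Printing Implicit Defensive.
Import GRing.Theory.
Local Open Scope ring_scope.

(* Words of length n over the alphabet {1..m} are represented by n.-tuple 'I_m
   (letter k+1 is represented by k). *)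

(* degree of asymmetry: number of positions i (1-based, 1 <= i <= n/2) with
   a_i <> a_{n+1-i}; 0-based: i with 2(i+1) <= n and w_i <> w_{n-1-i}. *)
Definition da (m n : nat) (w : n.-tuple 'I_m) : nat :=
  #|[set i : 'I_n | (2 * i.+1 <= n)%N && (tnth w i != tnth w (rev_ord i))]|.

(* Coefficient of x^n in W_m(t,x): the polynomial in t
   sum over words w of length n of t^da(w). *)
Definition Wcoef (m n : nat) : {poly int} :=
  \sum_(w : n.-tuple 'I_m) 'X^(da w).

(* Truncation of W_m(t,x) to x-degree <= N, as a polynomial in x whose
   coefficients are polynomials in t (outer variable 'X = x, inner 'X%:P = t). *)
Definition Wtrunc (m N : nat) : {poly {poly int}} :=
  \sum_(n < N.+1) (Wcoef m n)%:P * 'X^n.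

Definition Wden (m : nat) : {poly {poly int}} :=
  1 - m%:R * 'X^2 - (m * (m - 1))%:R * ('X)%:P * 'X^2.
Definition Wnum (m : nat) : {poly {poly int}} := 1 + m%:R * 'X.

(* Main.v *)
Require Import Defs.
From mathcomp Require Import all_boot all_order all_algebra zify ring.
Local Open Scope ring_scope.
Import GRing.Theory.

Definition g n (s : seq nat) : nat :=
  (\sum_(i < n) ((2*i.+1 <= n) && (nth 0 s i != nth 0 s (n.-1 - i))))%N.

Lemma daE m n (w : n.-tuple 'I_m) : da w = g n (map val w).
Proof.
rewrite /da -sum1_card big_mkcond /=. apply eq_bigr => i _. rewrite inE.
have H : forall j : 'I_n, nth 0%N (map val w) j = val (tnth w j).
  by move=> j; rewrite (nth_map (tnth w j)) ?size_tuple // -tnth_nth.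
have -> : (n.-1 - i)%N = rev_ord i by rewrite /=; lia.
rewrite !H.
by case: (_ && _).
Qed.

Lemma gS n a b s : size s = n -> g n.+2 (a :: rcons s b) = ((a != b) + g n s)%N.
Proof.
move=> hs. rewrite /g big_ord_recl /= big_ord_recr /=.
rewrite nth_rcons hs ltnn eqxx /bump /=.
have -> : (2 * (1 + n).+1 <= n.+2)%N = false by lia.
rewrite addn0; congr (_ + _)%N.
apply eq_bigr => i _ /=.
have hi := ltn_ord i.
rewrite add1n add0n.
have -> : (2 * i.+2 <= n.+2)%N = (2 * i.+1 <= n)%N by lia.
rewrite nth_rcons hs hi.
have -> : (n.+1 - i.+1 = (n.-1 - i).+1)%N by lia.
rewrite /= nth_rcons hs.
have -> : (n.-1 - i < n)%N by lia.
done.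
Qed.

Definition hh m n (p : 'I_m * 'I_m * n.-tuple 'I_m) : n.+2.-tuple 'I_m :=
  [tuple of p.1.1 :: rcons p.2 p.1.2].

Lemma da_hh m n (a b : 'I_m) (w : n.-tuple 'I_m) : da (@hh m n (a, b, w)) = ((a != b) + da w)%N.
Proof.
rewrite !daE /= map_rcons gS //; by rewrite size_map size_tuple.
Qed.

Lemma Wrec m n : Wcoef m n.+2 = (m%:R + (m*(m-1))%:R * 'X) * Wcoef m n.
Proof.
rewrite /Wcoef (reindex (@hh m n)); last first.
  apply: onW_bij; apply: inj_card_bij.
    move=> [[a b] w] [[a' b'] w'] /(congr1 val) /= [ea].
    move/rcons_inj => [ew eb]. 
    by rewrite ea eb (val_inj ew).
  by rewrite !card_prod !card_tuple !card_ord !expnS mulnA.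
have E p : 'X^(da (@hh m n p)) = 'X^(p.1.1 != p.1.2) * 'X^(da p.2) :> {poly int}.
  by case: p => [[a b] w]; rewrite da_hh exprD.
under eq_bigr do rewrite E.
rewrite -(pair_bigA _ (fun (ab : 'I_m * 'I_m) (w : n.-tuple 'I_m) => 'X^(ab.1 != ab.2) * 'X^(da w) : {poly int})) /=.
under eq_bigr do rewrite -mulr_sumr.
rewrite -mulr_suml; congr (_ * _).
rewrite -(pair_bigA _ (fun a b : 'I_m => 'X^(a != b) : {poly int})) /=.
have Ea a : \sum_(b : 'I_m) 'X^(a != b) = 1 + 'X *+ m.-1 :> {poly int}.
  rewrite (bigD1 a) //= eqxx expr0; congr (_ + _).
  under eq_bigr => b hb do rewrite eq_sym hb expr1.
  by rewrite sumr_const cardC1 card_ord.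
under eq_bigr do rewrite Ea.
rewrite sumr_const card_ord mulrnDl -mulrnA mulr_natl.
by rewrite mulnC subn1.
Qed.

Lemma Wcoef_small m n : (n <= 1)%N -> Wcoef m n = (m ^ n)%:R.
Proof.
move=> hn; rewrite /Wcoef.
have H (w : n.-tuple 'I_m) : da w = 0%N.
  rewrite /da; apply/eqP; rewrite cards_eq0; apply/eqP/setP => i; rewrite !inE.
  have hi := ltn_ord i; have -> : (2 * i.+1 <= n)%N = false by lia.
  done.
under eq_bigr do rewrite H expr0.
by rewrite sumr_const card_tuple card_ord.
Qed.

Lemma Pcoef m N j : (j <= N)%N -> (Wtrunc m N)`_j = Wcoef m j.
Proof.
move=> hj; rewrite /Wtrunc coef_sum.
rewrite (bigD1 (Ordinal (hj : (j < N.+1)%N))) //= coefCM coefXn eqxx mulr1 big1 ?addr0 //.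
move=> i /eqP hi; rewrite coefCM coefXn.
have -> : (j == i) = false by apply/eqP => e; apply: hi; apply: val_inj.
by rewrite mulr0.
Qed.

Theorem corollary2p4 (m : nat) (hm : (1 <= m)%N) :
  forall N k : nat, (k <= N)%N ->
    (Wden m * Wtrunc m N)`_k = (Wnum m)`_k.
Proof.
move=> N k hk.
pose a : {poly int} := m%:R + (m*(m-1))%:R * 'X.
have hD : Wden m = 1 - a%:P * 'X^2.
  rewrite /Wden /a rmorphD rmorphM /= !rmorph_nat. ring.
rewrite hD mulrBl mul1r coefB -mulrA coefCM coefXnM /Wnum coefD coef1.
rewrite mulr_natl coefMn coefX.
case: k hk => [|[|j]] hk /=.
- by rewrite mulr0 subr0 mul0rn addr0 Pcoef // Wcoef_small.
- by rewrite mulr0 subr0 add0r Pcoef // Wcoef_small // expn1.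
- rewrite !Pcoef //; last by lia.
  by rewrite subn2 /= Wrec subrr mul0rn addr0.
Qed.
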